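(* Let $\mu,\nu$ be Borel probability measures on $[0,1)$, with $\nu$ dyadically doubling with constant $D$ ($\nu(\hat I)\le D\nu(I)$ for $I\in\mathcal{D}\setminus\{[0,1)\}$). There exist constants $\epsilon>0$ and $C\ge1$, depending only on $D$, such that for every $I\in\mathcal{D}$ with $\alpha_{\mu,\nu}(I)<\epsilon$, $$\mu(I)\le C\min\{\mu(I_-),\mu(I_+)\}.$$
   Context: $\mathcal{D}$: dyadic intervals $[j2^{-k},(j+1)2^{-k})\subset[0,1)$, $k\ge0$; $\hat I$ is the parent of $I$, and $I_-,I_+$ are the left and right halves of $I$. Wasserstein distance: $\mathbb{W}_1(\nu_1,\nu_2) := \sup_\psi |\int\psi\,d\nu_1 - \int\psi\,d\nu_2|$ over all $1$-Lipschitz $\psi\colon\mathbb{R}\to\mathbb{R}$ supported on $[0,1]$. $T_I$ is the increasing affine map from $\overline I$ onto $[0,1]$, $\mu_I := T_{I\sharp}(\mu|_I)/\mu(I)$, $\nu_I := T_{I\sharp}(\nu|_I)/\nu(I)$ (zero if the mass vanishes), and $\alpha_{\mu,\nu}(I) := \mathbb{W}_1(\mu_I,\nu_I)$. *)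

(* Defs.v *)
From HB Require Import structures.
From mathcomp Require Import all_boot all_order all_algebra.
From mathcomp Require Import all_classical all_reals all_analysis.
Set Implicit Arguments. Unset Strict Implicit. Unset Printing Implicit Defensive.
Import Order.TTheory GRing.Theory Num.Theory.
Local Open Scope classical_set_scope.
Local Open Scope ring_scope.

Definition dyad {R : realType} (k j : nat) : set R :=
  [set x : R | j%:R / 2 ^+ k <= x /\ x < j.+1%:R / 2 ^+ k].

Definition Tdyad {R : realType} (k j : nat) (x : R) : R := x * 2 ^+ k - j%:R.

(* mu_I := (T_I)_# (mu|_I) / mu(I), and the zero measure if mu(I) = 0. *)
Definition rescaled {R : realType} (mu : set R -> \bar R) (k j : nat)
  : set R -> \bar R :=
  fun A => if mu (dyad k j) == 0%E then 0%E
           else (((fine (mu (dyad k j)))^-1)%:E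
                * mu (dyad k j `&` (Tdyad k j) @^-1` A))%E.

Definition lip1_supp01 {R : realType} (psi : R -> R) : Prop :=
  (forall x y, `|psi x - psi y| <= `|x - y|) /\
  (forall x, ~ (0 <= x <= 1) -> psi x = 0).

(* Wasserstein-1 distance (Kantorovich-Rubinstein form used in the paper). *)
Definition W1 {R : realType} (nu1 nu2 : set R -> \bar R) : \bar R :=
  ereal_sup [set `| (\int[nu1]_x (psi x)%:E) - (\int[nu2]_x (psi x)%:E) |%E
            | psi in [set psi : R -> R | lip1_supp01 psi]].

Definition alpha {R : realType} (mu nu : set R -> \bar R) (k j : nat) : \bar R :=
  W1 (rescaled mu k j) (rescaled nu k j).

(* Borel probability measure on [0,1), viewed as a measure on R. *)
Definition prob01 {R : realType} (mu : {measure set R -> \bar R}) : Prop :=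
  mu [set: R] = 1%E /\ mu [set` `[0%R, 1%R[] = 1%E.

Definition dyad_doubling {R : realType} (nu : set R -> \bar R) (D : R) : Prop :=
  forall (k j : nat), (j < 2 ^ k.+1)%N ->
    (nu (dyad k j./2) <= D%:E * nu (dyad k.+1 j))%E.

(* Main.v *)
Require Import Defs.
From HB Require Import structures.
From mathcomp Require Import all_boot all_order all_algebra.
From mathcomp Require Import all_classical all_reals all_analysis.
From mathcomp Require Import lra ring zify measurable_realfun.
Import Order.TTheory GRing.Theory Num.Theory.
Local Open Scope classical_set_scope.
Local Open Scope ring_scope.

Section S.
Variable R : realType.

Lemma dyad_itv (k j : nat) :
  dyad k j = [set` `[(j%:R / 2 ^+ k : R), j.+1%:R / 2 ^+ k[].
Proof. by apply/seteqP; split => x; rewrite /dyad /= in_itv /= => /andP. Qed.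

Lemma dyad_meas (k j : nat) : measurable (dyad k j : set R).
Proof. by rewrite dyad_itv; exact: measurable_itv. Qed.

Lemma dyad_pre (k j n m : nat) : (m < 2 ^ n)%N ->
  dyad k j `&` Tdyad k j @^-1` dyad n m = (dyad (k + n) (j * 2 ^ n + m) : set R).
Proof.
move=> mn.
have P0 : (0 : R) < 2 ^+ k by rewrite exprn_gt0.
have Q0 : (0 : R) < 2 ^+ n by rewrite exprn_gt0.
have mQ : (m%:R + 1 : R) <= 2 ^+ n.
  by rewrite natr1 -natrX ler_nat.
rewrite /dyad /Tdyad -(@natr1 R j) -(@natr1 R m) -(@natr1 R (j * 2 ^ n + m)) natrD natrM natrX exprD.
move: P0 Q0 mQ; set P := (2:R) ^+ k; set Q := (2:R) ^+ n => P0 Q0 mQ.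
apply/seteqP; split => x.
  move=> [[h1 h2] [h3 h4]]; move: h1 h2 h3 h4; rewrite -/P -/Q.
  rewrite !ler_pdivrMr ?ltr_pdivlMr ?ltr_pdivrMr ?ler_pdivlMr ?mulr_gt0 // => h1 h2 h3 h4.
  split; rewrite ?ler_pdivrMr ?ltr_pdivlMr ?ltr_pdivrMr ?ler_pdivlMr ?mulr_gt0 //; nra.
have m0 : (0:R) <= m%:R := ler0n _ _.
move=> [h1 h2]; move: h1 h2; rewrite -/P -/Q.
rewrite !ler_pdivrMr ?ltr_pdivlMr ?ltr_pdivrMr ?ler_pdivlMr ?mulr_gt0 // => h1 h2.
split; [split|split]; rewrite -/P -/Q ?ler_pdivrMr ?ltr_pdivlMr ?ltr_pdivrMr ?ler_pdivlMr ?mulr_gt0 //; nra.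
Qed.

Lemma Tdyad_meas (k j : nat) : measurable_fun setT (Tdyad k j : R -> R).
Proof.
rewrite /Tdyad; apply: measurable_realfun.measurable_funB => //; apply: measurable_realfun.measurable_funM => //.
Qed.

End S.

Section resc.
Local Open Scope ereal_scope.
Context (R : realType) (mu : {measure set R -> \bar R}) (k j : nat) (c : {nonneg R}).

Definition resc (A : set R) : \bar R :=
  c%:num%:E * mu (dyad k j `&` Tdyad k j @^-1` A).

Let resc0 : resc set0 = 0.
Proof. by rewrite /resc preimage_set0 setI0 measure0 mule0. Qed.

Let resc_ge0 B : 0 <= resc B.
Proof. by rewrite /resc mule_ge0. Qed.

Let resc_sigma_additive : semi_sigma_additive resc.
Proof.
move=> F mF tF mUF.
pose G n := dyad k j `&` Tdyad k j @^-1` F n.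
have mT := @Tdyad_meas R k j.
have mG n : measurable (G n).
  apply: measurableI; first exact: dyad_meas.
  rewrite -[X in measurable X]setTI; exact: mT.
have tG : trivIset setT G.
  apply/trivIsetP => /= a b _ _ ab.
  move/trivIsetP : tF => /(_ a b Logic.I Logic.I ab).
  rewrite /G setIACA -preimage_setI => ->; by rewrite preimage_set0 setI0.
have UG : \bigcup_n G n = dyad k j `&` Tdyad k j @^-1` \bigcup_n F n.
  by rewrite preimage_bigcup setI_bigcupr.
rewrite [X in X @ \oo --> _](_ : _ =
    (fun n => (c%:num)%:E * \sum_(0 <= i < n) mu (G i))); last first.
  by apply/funext => n; rewrite ge0_sume_distrr.
rewrite /resc -UG; have [->|c0] := eqVneq c%:num 0%R.
  rewrite mul0e [X in X @ \oo --> _](_ : _ = cst 0); first exact: cvg_cst.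
  by under eq_fun do rewrite mul0e.
apply: cvgeZl => //; apply: measure_semi_sigma_additive => //.
by rewrite UG; apply: measurableI; [exact: dyad_meas|
  rewrite -[X in measurable X]setTI; exact: mT].
Qed.

HB.instance Definition _ := isMeasure.Build _ _ _ resc
  resc0 resc_ge0 resc_sigma_additive.

End resc.

Section tent.
Variable R : realType.
Local Open Scope ring_scope.

Definition tent (c x : R) : R := Num.max 0 (4^-1 - `|x - c|).

Lemma maxlip (u v : R) : `|Num.max 0 u - Num.max 0 v| <= `|u - v|.
Proof.
have [h|h] := lerP 0 (u - v); [rewrite (ger0_norm h) | rewrite (ltr0_norm h)];
  rewrite ler_norml !maxEle; case: (leP 0 u); case: (leP 0 v) => a b;
  apply/andP; split; lra.
Qed.

Lemma tent_lip (c x y : R) : `|tent c x - tent c y| <= `|x - y|.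
Proof.
apply: le_trans (maxlip _ _) _.
have -> : (4^-1 - `|x - c|) - (4^-1 - `|y - c|) = `|y - c| - `|x - c| by ring.
apply: le_trans (ler_dist_dist _ _) _.
have -> : (y - c) - (x - c) = y - x by ring.
by rewrite distrC.
Qed.

Lemma tent_zero (c x : R) : (x <= c - 4^-1) \/ (c + 4^-1 <= x) -> tent c x = 0.
Proof.
move=> hx; apply/max_idPl; rewrite subr_le0.
have [h|h] := lerP 0 (x - c).
  rewrite ger0_norm //; case: hx => hx; lra.
rewrite ltr0_norm //; case: hx => hx; lra.
Qed.

Lemma tent_ge0 (c x : R) : 0 <= tent c x.
Proof. by rewrite /tent le_max lexx. Qed.

Lemma tent_le (c x : R) : tent c x <= 4^-1.
Proof.
rewrite /tent ge_max; apply/andP; split; first lra.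
have := normr_ge0 (x - c); lra.
Qed.

Lemma tent_supp (h : nat) : (h < 2)%N ->
  lip1_supp01 (tent (h%:R / 2 + 4^-1)).
Proof.
move=> h2; split; first exact: tent_lip.
have hh : (h%:R : R) <= 1 by rewrite -(mulr1n (1:R)) ler_nat -ltnS.
have h0 : (0 : R) <= h%:R := ler0n _ _.
move=> x hx; apply: tent_zero.
have [x0|x0] := lerP 0 x; last by left; lra.
have [x1|x1] := lerP x 1; first by rewrite x0 x1 in hx.
by right; lra.
Qed.

Lemma tent_measurable (c : R) : measurable_fun setT (EFin \o tent c).
Proof.
apply/measurable_EFinP; rewrite /tent.
apply: measurable_realfun.measurable_maxr => //.
apply: measurable_realfun.measurable_funB => //.
apply: measurableT_comp; first exact: measurable_realfun.normr_measurable.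
exact: measurable_realfun.measurable_funB.
Qed.

Lemma tent_ub (h : nat) x :
  tent (h%:R / 2 + 4^-1) x <= 4^-1 * \1_(dyad 1 h) x.
Proof.
rewrite indicE; case: (boolP (x \in dyad 1 h)) => hx.
  by rewrite mulr1 tent_le.
rewrite mulr0 tent_zero ?lexx //.
move/negP: hx; rewrite in_setE /dyad /= -(@natr1 R h) expr1.
have [h1|h1] := lerP (h%:R / 2) x.
  have [h2|h2] := lerP ((h%:R + 1) / 2) x; first by right; lra.
  by move=> /(_ (conj isT isT)).
by left; lra.
Qed.

Lemma tent_lb (h : nat) x :
  8^-1 * \1_(dyad 3 (4 * h + 2)) x <= tent (h%:R / 2 + 4^-1) x.
Proof.
rewrite indicE; case: (boolP (x \in dyad 3 (4 * h + 2))) => hx; last first.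
  by rewrite mulr0 tent_ge0.
rewrite mulr1 /tent le_max; apply/orP; right.
move: hx; rewrite in_setE /dyad /= -(@natr1 R (4 * h + 2)) natrD natrM.
have -> : (2 : R) ^+ 3 = 8 by rewrite !exprS expr0; ring.
move=> [a b].
rewrite ger0_norm; lra.
Qed.

Lemma int_ub (M : {measure set R -> \bar R}) (c : R) (A : set R) :
  measurable A -> (forall x, tent c x <= 4^-1 * \1_A x) ->
  (\int[M]_x (tent c x)%:E <= (4^-1)%:E * M A)%E.
Proof.
move=> mA H.
apply: (@le_trans _ _ (\int[M]_x ((4^-1 * \1_A x)%:E))%E).
  apply: ge0_le_integral => //.
  all: try (by move=> x _; rewrite lee_fin ?tent_ge0 ?H ?mulr_ge0 ?indicE ?ler0n).
  all: try exact: tent_measurable.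
  all: try (apply/measurable_EFinP; apply: measurable_realfun.measurable_funM => //; exact: measurable_indic).
under eq_integral do rewrite EFinM.
rewrite ge0_integralZl //.
all: try (by rewrite integral_indic // setIT).
all: try (by apply/measurable_EFinP; exact: measurable_indic).
all: try (by move=> x _; rewrite lee_fin indicE ler0n).
all: try (by rewrite lee_fin; lra).
Qed.

Lemma int_lb (M : {measure set R -> \bar R}) (c : R) (A : set R) :
  measurable A -> (forall x, 8^-1 * \1_A x <= tent c x) ->
  ((8^-1)%:E * M A <= \int[M]_x (tent c x)%:E)%E.
Proof.
move=> mA H.
apply: (@le_trans _ _ (\int[M]_x ((8^-1 * \1_A x)%:E))%E); last first.
  apply: ge0_le_integral => //.
  all: try (by move=> x _; rewrite lee_fin ?tent_ge0 ?H ?mulr_ge0 ?indicE ?ler0n).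
  all: try exact: tent_measurable.
  all: try (apply/measurable_EFinP; apply: measurable_realfun.measurable_funM => //; exact: measurable_indic).
under eq_integral do rewrite EFinM.
rewrite ge0_integralZl //.
all: try (by rewrite integral_indic // setIT).
all: try (by apply/measurable_EFinP; exact: measurable_indic).
all: try (by move=> x _; rewrite lee_fin indicE ler0n).
all: try (by rewrite lee_fin; lra).
Qed.

End tent.

Section main.
Variable R : realType.
Local Open Scope ring_scope.

Lemma pfin (mu : {measure set R -> \bar R}) (A : set R) :
  prob01 mu -> measurable A ->
  mu A = (fine (mu A))%:E /\ 0 <= fine (mu A) <= 1.
Proof.
move=> [P1 _] mA.
have h0 : (0 <= mu A)%E := measure_ge0 mu A.
have h1 : (mu A <= 1)%E.
  by rewrite -P1; apply: le_measure => //; rewrite inE.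
move: h0 h1; set x := mu A; case: x => [r| |] //= h0 h1.
by rewrite lee_fin in h0; rewrite h0 -lee_fin h1.
Qed.

Lemma half_eq (a b : nat) : (b < 2)%N -> (a * 2 + b)./2 = a.
Proof. by move=> b2; rewrite -divn2 divnMDl // divn_small // addn0. Qed.

Lemma nu_pos (nu : {measure set R -> \bar R}) (D : R) :
  prob01 nu -> dyad_doubling nu D ->
  forall k j, (j < 2 ^ k)%N -> (0 < nu (dyad k j))%E.
Proof.
move=> Pn Dn; elim=> [|k IH] j hj.
  have -> : j = 0%N by move: hj; rewrite expn0; case: j.
  have -> : dyad 0 0 = [set` `[(0:R), 1[] by rewrite dyad_itv expr0 !divr1.
  by rewrite Pn.2.
have hj2 : (j./2 < 2 ^ k)%N by rewrite ltn_half_double -mul2n -expnS.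
have := IH _ hj2 => /lt_le_trans /(_ (Dn k j hj)).
rewrite lt0e => /andP [ne _]; rewrite lt0e measure_ge0 andbT.
by apply: contraNneq ne => ->; rewrite mule0.
Qed.

Lemma dbl_step (nu : {measure set R -> \bar R}) (D : R) k a b :
  prob01 nu -> dyad_doubling nu D -> (b < 2)%N -> (a * 2 + b < 2 ^ k.+1)%N ->
  fine (nu (dyad k a)) <= D * fine (nu (dyad k.+1 (a * 2 + b))).
Proof.
move=> Pn Dn b2 hab; have := Dn k _ hab; rewrite half_eq //.
rewrite (pfin _ _ Pn (dyad_meas _ _ _)).1.
rewrite [X in (_ <= _ * X)%E](pfin _ _ Pn (dyad_meas _ _ _)).1.
by rewrite -EFinM lee_fin.
Qed.

Lemma fin_bnd (X : \bar R) (r : R) : (0 <= X)%E -> (X <= r%:E)%E -> X = (fine X)%:E.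
Proof. by case: X. Qed.


Lemma idx_eq (j h : nat) : (j * 8 + (4 * h + 2) = ((j * 2 + h) * 2 + 1) * 2 + 0)%N.
Proof. lia. Qed.

Lemma half_bound (D : R) (mu nu : {measure set R -> \bar R}) k j h :
  prob01 mu -> prob01 nu -> dyad_doubling nu D -> (j < 2 ^ k)%N -> (h < 2)%N ->
  (alpha mu nu k j < ((16 * (Num.max D 1) ^+ 3)^-1)%:E)%E ->
  0 < fine (mu (dyad k j)) ->
  fine (mu (dyad k j)) <= 4 * (Num.max D 1) ^+ 3 * fine (mu (dyad k.+1 (j * 2 + h))).
Proof.
move=> Pm Pn Dn hj h2 Ha m0.
set P := Num.max D 1 ^+ 3 in Ha *.
have Dp1 : 1 <= Num.max D 1 by rewrite le_max lexx orbT.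
have P1 : 1 <= P by rewrite exprn_ege1.
have [mE _] := pfin _ _ Pm (dyad_meas R k j).
set m := fine (mu (dyad k j)) in mE m0 *.
have [nE n01] := pfin _ _ Pn (dyad_meas R k j).
set n := fine (nu (dyad k j)) in nE n01 *.
have n0 : 0 < n by rewrite -lte_fin -nE; apply: (nu_pos _ _ Pn Dn).
have i1 : (j * 2 + h < 2 ^ k.+1)%N by rewrite expnS; lia.
have i2 : ((j * 2 + h) * 2 + 1 < 2 ^ k.+2)%N by rewrite !expnS; lia.
have i3 : (((j * 2 + h) * 2 + 1) * 2 + 0 < 2 ^ k.+3)%N by rewrite !expnS; lia.
have e1 := dbl_step _ _ k j h Pn Dn h2 i1.
have e2 := dbl_step _ _ k.+1 (j * 2 + h) 1 Pn Dn (isT : (1 < 2)%N) i2.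
have e3 := dbl_step _ _ k.+2 ((j * 2 + h) * 2 + 1) 0 Pn Dn (isT : (0 < 2)%N) i3.
have [_ b1] := pfin _ _ Pn (dyad_meas R k.+1 (j * 2 + h)).
have [_ b2] := pfin _ _ Pn (dyad_meas R k.+2 ((j * 2 + h) * 2 + 1)).
have [_ b3] := pfin _ _ Pn (dyad_meas R k.+3 (((j * 2 + h) * 2 + 1) * 2 + 0)).
rewrite -/n in e1.
set n1 := fine (nu (dyad k.+1 (j * 2 + h))) in e1 e2 b1.
set n2 := fine (nu (dyad k.+2 ((j * 2 + h) * 2 + 1))) in e2 e3 b2.
set ns := fine (nu (dyad k.+3 (((j * 2 + h) * 2 + 1) * 2 + 0))) in e3 b3.
have D0 : 0 < D.
  case/andP: b1 => b1 _; rewrite ltNge; apply/negP => D0.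
  have : D * n1 <= 0 by rewrite mulr_le0_ge0.
  lra.
have f3 : n2 <= Num.max D 1 * ns.
  apply: le_trans e3 _; apply: ler_wpM2r; [by case/andP: b3|by rewrite le_max lexx].
have f2 : n1 <= Num.max D 1 * n2.
  apply: le_trans e2 _; apply: ler_wpM2r; [by case/andP: b2|by rewrite le_max lexx].
have f1 : n <= Num.max D 1 * n1.
  apply: le_trans e1 _; apply: ler_wpM2r; [by case/andP: b1|by rewrite le_max lexx].
have chain : n <= P * ns.
  rewrite /P !exprS expr0 mulr1.
  have Dq : 0 <= Num.max D 1 by lra.
  apply: (le_trans f1); rewrite -!mulrA; apply: ler_wpM2l => //.
  apply: (le_trans f2); apply: ler_wpM2l => //.
have e8 : (2 ^ 3 = 8)%N by [].
have Ehalf : dyad k j `&` Tdyad k j @^-1` dyad 1 h = (dyad k.+1 (j * 2 + h) : set R).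
  by rewrite (@dyad_pre R k j 1 h) ?expn1 ?addn1.
have Esub : dyad k j `&` Tdyad k j @^-1` dyad 3 (4 * h + 2)
    = (dyad k.+3 (((j * 2 + h) * 2 + 1) * 2 + 0) : set R).
  rewrite (@dyad_pre R k j 3 (4 * h + 2)); last by rewrite e8; case: (h) h2 => [|[|]].
  by rewrite e8 addn3 idx_eq.
have [mhE _] := pfin _ _ Pm (dyad_meas R k.+1 (j * 2 + h)).
have [nhE /andP[nh0 nh1]] := pfin _ _ Pn (dyad_meas R k.+1 (j * 2 + h)).
have [nsE _] := pfin _ _ Pn (dyad_meas R k.+3 (((j * 2 + h) * 2 + 1) * 2 + 0)).
rewrite -/ns in nsE.
have eqmu : rescaled mu k j = resc R mu k j (`|m^-1|)%:nng.
  apply/funext => A; rewrite /rescaled /resc /= mE eqe gt_eqF //=.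
  by rewrite ger0_norm // invr_ge0 ltW.
have eqnu : rescaled nu k j = resc R nu k j (`|n^-1|)%:nng.
  apply/funext => A; rewrite /rescaled /resc /= nE eqe gt_eqF //=.
  by rewrite ger0_norm // invr_ge0 ltW.
rewrite /alpha eqmu eqnu in Ha.
set Mmu := resc R mu k j (`|m^-1|)%:nng in Ha.
set Mnu := resc R nu k j (`|n^-1|)%:nng in Ha.
set psi := tent R (h%:R / 2 + 4^-1).
have HW : (`| \int[Mmu]_x (psi x)%:E - \int[Mnu]_x (psi x)%:E |%E <= W1 Mmu Mnu)%E.
  by apply: ereal_sup_ubound; exists psi => //; exact: tent_supp R h h2.
have Hd := le_lt_trans HW Ha.
have Xub := int_ub R Mmu _ _ (dyad_meas R 1 h) (tent_ub R h).
have Yub := int_ub R Mnu _ _ (dyad_meas R 1 h) (tent_ub R h).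
have Ylb := int_lb R Mnu _ _ (dyad_meas R 3 (4 * h + 2)) (tent_lb R h).
rewrite -/psi in Xub Yub Ylb.
have cm : ((`|m^-1|)%:nng%:num : R) = m^-1 by rewrite /= ger0_norm // invr_ge0 ltW.
have cn : ((`|n^-1|)%:nng%:num : R) = n^-1 by rewrite /= ger0_norm // invr_ge0 ltW.
have MmuE : Mmu (dyad 1 h) = (m^-1 * fine (mu (dyad k.+1 (j * 2 + h))))%:E.
  by rewrite /Mmu /resc Ehalf mhE cm EFinM.
have MnuE : Mnu (dyad 1 h) = (n^-1 * fine (nu (dyad k.+1 (j * 2 + h))))%:E.
  by rewrite /Mnu /resc Ehalf nhE cn EFinM.
have MnsE : Mnu (dyad 3 (4 * h + 2)) = (n^-1 * ns)%:E.
  by rewrite /Mnu /resc Esub nsE cn EFinM.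
set mh := fine (mu (dyad k.+1 (j * 2 + h))) in MmuE *.
set nh := fine (nu (dyad k.+1 (j * 2 + h))) in MnuE nh0 nh1.
have {}Xub : (\int[Mmu]_x (psi x)%:E <= (4^-1 * (m^-1 * mh))%:E)%E.
  by rewrite EFinM -MmuE; exact: Xub.
have {}Yub : (\int[Mnu]_x (psi x)%:E <= (4^-1 * (n^-1 * nh))%:E)%E.
  by rewrite EFinM -MnuE; exact: Yub.
have {}Ylb : ((8^-1 * (n^-1 * ns))%:E <= \int[Mnu]_x (psi x)%:E)%E.
  by rewrite EFinM -MnsE; exact: Ylb.
have X0 : (0 <= \int[Mmu]_x (psi x)%:E)%E.
  by apply: integral_ge0 => x _; rewrite lee_fin tent_ge0.
have Y0 : (0 <= \int[Mnu]_x (psi x)%:E)%E.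
  by apply: integral_ge0 => x _; rewrite lee_fin tent_ge0.
have XE := fin_bnd _ _ X0 Xub.
have YE := fin_bnd _ _ Y0 Yub.
set x := fine (\int[Mmu]_x (psi x)%:E) in XE.
set y := fine (\int[Mnu]_x (psi x)%:E) in YE.
rewrite XE lee_fin in Xub.
rewrite YE lee_fin in Ylb.
rewrite XE YE -EFinB abse_EFin lte_fin in Hd.
have mn0 : m != 0 by rewrite gt_eqF.
have nn0 : n != 0 by rewrite gt_eqF.
have a1 : 4 * m * x <= mh.
  have := ler_wpM2l (_ : 0 <= 4 * m) Xub.
  have -> : 4 * m * (4^-1 * (m^-1 * mh)) = mh by field.
  by apply; lra.
have a2 : ns <= 8 * n * y.
  have := ler_wpM2l (_ : 0 <= 8 * n) Ylb.
  have -> : 8 * n * (8^-1 * (n^-1 * ns)) = ns by field.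
  by apply; lra.
have a3 : 16 * P * (y - x) < 1.
  have h3 : y - x < (16 * P)^-1.
    by apply: le_lt_trans Hd; rewrite distrC ler_norm.
  have p16 : 0 < 16 * P by lra.
  by rewrite -(ltr_pM2l p16) mulfV ?gt_eqF in h3.
have a4 : n <= 8 * P * n * y.
  apply: (le_trans chain).
  have := ler_wpM2l (_ : 0 <= P) a2.
  have -> : P * (8 * n * y) = 8 * P * n * y by ring.
  by apply; lra.
have a5 : 1 <= 8 * P * y.
  rewrite -(ler_pM2l n0) mulr1; apply: (le_trans a4).
  by rewrite le_eqVlt; apply/orP; left; apply/eqP; ring.
have a6 : 1 < 16 * P * x by lra.
have a7 : 16 * P * (m * x) <= 4 * P * mh.
  have := ler_wpM2l (_ : 0 <= 4 * P) a1.
  have -> : 4 * P * (4 * m * x) = 16 * P * (m * x) by ring.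
  by apply; lra.
have a8 : m < m * (16 * P * x).
  by rewrite -{1}(mulr1 m) ltr_pM2l.
apply: ltW; apply: (lt_le_trans a8).
by have -> : m * (16 * P * x) = 16 * P * (m * x) by ring.
Qed.

End main.

Theorem mainTheorem8 (R : realType) (D : R) :
  exists (eps C : R), 0 < eps /\ 1 <= C /\
    forall (mu nu : {measure set R -> \bar R}),
      prob01 mu -> prob01 nu -> dyad_doubling nu D ->
      forall (k j : nat), (j < 2 ^ k)%N ->
        (alpha mu nu k j < eps%:E)%E ->
        (mu (dyad k j) <=
           C%:E * Order.min (mu (dyad k.+1 j.*2)) (mu (dyad k.+1 j.*2.+1)))%E.
Proof.
have Dp1 : 1 <= Num.max D 1 by rewrite le_max lexx orbT.
have P1 : 1 <= Num.max D 1 ^+ 3 by rewrite exprn_ege1.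
exists ((16 * (Num.max D 1) ^+ 3)^-1), (4 * (Num.max D 1) ^+ 3).
split; first by rewrite invr_gt0; lra.
split; first lra.
move=> mu nu Pm Pn Dn k j hj Ha.
have [mE /andP[m0 m1]] := pfin _ _ _ Pm (dyad_meas R k j).
have [aE /andP[a0 _]] := pfin _ _ _ Pm (dyad_meas R k.+1 j.*2).
have [bE /andP[b0 _]] := pfin _ _ _ Pm (dyad_meas R k.+1 j.*2.+1).
rewrite mE aE bE.
have [z|mpos] := eqVneq (fine (mu (dyad k j))) 0.
  rewrite z; apply: mule_ge0; first by rewrite lee_fin; lra.
  by rewrite le_min !lee_fin a0 b0.
have mp : 0 < fine (mu (dyad k j)) by rewrite lt0r mpos m0.
have H0 := half_bound _ _ _ _ _ _ _ Pm Pn Dn hj (isT : (0 < 2)%N) Ha mp.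
have H1 := half_bound _ _ _ _ _ _ _ Pm Pn Dn hj (isT : (1 < 2)%N) Ha mp.
rewrite addn0 muln2 in H0; rewrite addn1 muln2 in H1.
rewrite minEle; case: ifP => _; rewrite -EFinM lee_fin //.
Qed.
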